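(* Let $\mathcal{Q}\subset\mathcal{E}$ be a smooth embedded submanifold with projection function $\Pi$ for $T\mathcal{Q}$, and embed $T^*\mathcal{Q}=\{(q,p): q\in\mathcal{Q},\ \Pi(q)^{T}p=p\}\subset\mathcal{E}^2$. Fix $(q,p)\in T^*\mathcal{Q}$. For $(h_q,h_p)\in\mathcal{E}^2$ set $$e_q=\Pi(q)h_p,\qquad e_p=\Pi'(q;e_q)^{T}p-\Pi(q)^{T}\big\{h_q+\{X\mapsto\Pi'(q;X)^{T}p\}^{T}h_p\big\}.$$ Then $(e_q,e_p)\in T_{(q,p)}T^*\mathcal{Q}$ and for all $(\xi_q,\xi_p)\in T_{(q,p)}T^*\mathcal{Q}$, $$h_q\cdot\xi_q+h_p\cdot\xi_p=e_q\cdot\xi_p-e_p\cdot\xi_q=\Omega\big((e_q,e_p),(\xi_q,\xi_p)\big).$$ Restricted to $T^*_{(q,p)}T^*\mathcal{Q}=\{(s_q,s_p):\Pi(q)^{T}s_q=s_q,\ \Pi(q)s_p=s_p\}$, the map $(h_q,h_p)\mapsto(e_q,e_p)$ is a bijection onto $T_{(q,p)}T^*\mathcal{Q}$ with inverse $(e_q,e_p)\mapsto(-\Pi(q)^{T}e_p,\ e_q)$; consequently $\Omega$ is nondegenerate on $T_{(q,p)}T^*\mathcal{Q}$ and $(e_q,e_p)$ is the unique element of $T_{(q,p)}T^*\mathcal{Q}$ satisfying the displayed identity. Hence, for a smooth function $H$ on $T^*\mathcal{Q}$ extended smoothly to a neighborhood in $\mathcal{E}^2$ with partial gradients $(H_q,H_p)$,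 the unique vector field $X_H$ on $T^*\mathcal{Q}$ with $\Omega(X_H,Y)=D_YH$ for all vector fields $Y$ on $T^*\mathcal{Q}$ is $$X_H(q,p)=\Big(\Pi(q)H_p,\ \ \Pi'(q;\Pi(q)H_p)^{T}p-\Pi(q)^{T}\big\{H_q+\{X\mapsto\Pi'(q;X)^{T}p\}^{T}H_p\big\}\Big).$$
   Context: $\mathcal{E}$ is a finite-dimensional real inner product space (inner product $a\cdot b$, adjoint $A^{T}$). A projection function for $T\mathcal{Q}$ is a smooth map $\Pi:\mathcal{Q}\to\mathrm{Lin}(\mathcal{E},\mathcal{E})$ with $\Pi(q)^2=\Pi(q)$ and $\mathrm{Im}\,\Pi(q)=T_q\mathcal{Q}$; $\Pi'(q;\xi)$ is its directional derivative. The tangent space of the embedded cotangent bundle is $T_{(q,p)}T^*\mathcal{Q}=\{(\Delta_q,\Delta_p)\in T_q\mathcal{Q}\times\mathcal{E}:\ \Delta_p=\Pi(q)^{T}\Delta_p+\Pi'(q;\Delta_q)^{T}p\}$. The Poincaré 2-form is $\Omega((a,b),(c,d))=a\cdot d-b\cdot c$ (restricted to $T T^*\mathcal{Q}$). Index-raising notation: $\{X\mapsto\Pi'(q;X)^{T}p\}^{T}h$ denotes the unique $\Phi\in T_q\mathcal{Q}$ with $\Delta\cdot\Phi=h\cdot\Pi'(q;\Delta)^{T}p$ for all $\Delta\in T_q\mathcal{Q}$. *)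

(* Defs.v *)
From HB Require Import structures.
From mathcomp Require Import all_boot all_order all_algebra.
From mathcomp Require Import all_classical all_reals all_analysis.
Set Implicit Arguments. Unset Strict Implicit. Unset Printing Implicit Defensive.
Import Order.TTheory GRing.Theory Num.Theory.
Import numFieldNormedType.Exports.
Local Open Scope classical_set_scope.
Local Open Scope ring_scope.

(* The ambient Euclidean space E is modelled as column vectors 'cV[R]_n with
   the standard inner product; linear maps E -> E are n x n matrices acting on
   the left, and the adjoint A^T is the matrix transpose. *)
Definition dotv (R : ringType) (n : nat) (u v : 'cV[R]_n) : R := (u^T *m v) 0 0.

Fixpoint iterD (R : realType) (V W : normedModType R) (vs : seq V) (f : V -> W)
  : V -> W :=
  if vs is v :: vs' then (fun x => 'D_v (iterD vs' f) x) else f.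

Definition smooth_on (R : realType) (V W : normedModType R) (U : set V)
    (f : V -> W) : Prop :=
  forall (vs : seq V) (x : V), U x -> differentiable (iterD vs f) x.

Definition tangent_space (R : realType) (n : nat) (Q : set 'cV[R]_n)
    (q v : 'cV[R]_n) : Prop :=
  exists gam : R -> 'cV[R]_n,
    [/\ gam 0 = q, (\forall t \near 0, Q (gam t)),
        derivable gam 0 1 & 'D_1 gam 0 = v].

(* Q is a smooth embedded submanifold of 'cV[R]_n (of some dimension k):
   around each point it is the image of a smooth injective immersion which is
   a homeomorphism onto an open piece Q ∩ U of Q. *)
Definition embedded_submanifold (R : realType) (n : nat) (Q : set 'cV[R]_n)
  : Prop :=
  exists k : nat, forall q, Q q ->
    exists (U : set 'cV[R]_n) (V : set 'cV[R]_k)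
           (phi : 'cV[R]_k -> 'cV[R]_n) (psi : 'cV[R]_n -> 'cV[R]_k),
      [/\ open U, U q, open V, smooth_on V phi & phi @` V = Q `&` U] /\
      [/\ (forall u, V u -> psi (phi u) = u),
          {within Q `&` U, continuous psi} &
          (forall u, V u -> injective (fun w : 'cV[R]_k => 'D_w phi u))].

(* Projection function for TQ: Pi is smooth (on an open neighbourhood of Q,
   i.e. it is given together with a smooth extension), and at each q in Q,
   Pi q is idempotent with image T_q Q. *)
Definition projection_function (R : realType) (n : nat) (Q : set 'cV[R]_n)
    (Pi : 'cV[R]_n -> 'M[R]_n) : Prop :=
  (exists U : set 'cV[R]_n, [/\ open U, Q `<=` U & smooth_on U Pi]) /\
  (forall q, Q q ->
     Pi q *m Pi q = Pi q /\
     (forall v, (exists w, v = Pi q *m w) <-> tangent_space Q q v)).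

Definition Pid (R : realType) (n : nat) (Pi : 'cV[R]_n -> 'M[R]_n)
    (q xi : 'cV[R]_n) : 'M[R]_n := 'D_xi Pi q.

Definition Tstar (R : realType) (n : nat) (Q : set 'cV[R]_n)
    (Pi : 'cV[R]_n -> 'M[R]_n) : set ('cV[R]_n * 'cV[R]_n) :=
  fun z => Q z.1 /\ (Pi z.1)^T *m z.2 = z.2.

Definition TTstar (R : realType) (n : nat) (Q : set 'cV[R]_n)
    (Pi : 'cV[R]_n -> 'M[R]_n) (q p dq dp : 'cV[R]_n) : Prop :=
  tangent_space Q q dq /\ dp = (Pi q)^T *m dp + (Pid Pi q dq)^T *m p.

Definition Omega (R : ringType) (n : nat) (x y : 'cV[R]_n * 'cV[R]_n) : R :=
  dotv x.1 y.2 - dotv x.2 y.1.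

(* Index raising {X |-> Pi'(q;X)^T p}^T h : the unique Phi in T_q Q with
   Delta . Phi = h . Pi'(q;Delta)^T p for all Delta in T_q Q. *)
Definition raise (R : realType) (n : nat) (Q : set 'cV[R]_n)
    (Pi : 'cV[R]_n -> 'M[R]_n) (q p h : 'cV[R]_n) : 'cV[R]_n :=
  xget 0 [set Phi | tangent_space Q q Phi /\
           forall D, tangent_space Q q D ->
             dotv D Phi = dotv h ((Pid Pi q D)^T *m p)].

Definition ham_e (R : realType) (n : nat) (Q : set 'cV[R]_n)
    (Pi : 'cV[R]_n -> 'M[R]_n) (q p hq hp : 'cV[R]_n)
  : 'cV[R]_n * 'cV[R]_n :=
  let eq := Pi q *m hp in
  (eq, (Pid Pi q eq)^T *m p - (Pi q)^T *m (hq + raise Q Pi q p hp)).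

Definition cotS (R : ringType) (n : nat) (Pi : 'cV[R]_n -> 'M[R]_n)
    (q : 'cV[R]_n) : set ('cV[R]_n * 'cV[R]_n) :=
  fun s => (Pi q)^T *m s.1 = s.1 /\ Pi q *m s.2 = s.2.

Definition vector_field (R : realType) (n : nat) (Q : set 'cV[R]_n)
    (Pi : 'cV[R]_n -> 'M[R]_n)
    (X : 'cV[R]_n * 'cV[R]_n -> 'cV[R]_n * 'cV[R]_n) : Prop :=
  forall z, Tstar Q Pi z -> TTstar Q Pi z.1 z.2 (X z).1 (X z).2.

Definition gradq (R : realType) (n : nat) (H : 'cV[R]_n * 'cV[R]_n -> R)
    (z : 'cV[R]_n * 'cV[R]_n) : 'cV[R]_n :=
  \col_i 'D_((delta_mx i 0 : 'cV[R]_n), (0 : 'cV[R]_n)) H z.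
Definition gradp (R : realType) (n : nat) (H : 'cV[R]_n * 'cV[R]_n -> R)
    (z : 'cV[R]_n * 'cV[R]_n) : 'cV[R]_n :=
  \col_i 'D_((0 : 'cV[R]_n), (delta_mx i 0 : 'cV[R]_n)) H z.

(* Main.v *)
Require Import Defs.
From HB Require Import structures.
From mathcomp Require Import all_boot all_order all_algebra.
From mathcomp Require Import all_classical all_reals all_analysis.
From mathcomp Require Import ring.
Import Order.TTheory GRing.Theory Num.Theory.
Import numFieldNormedType.Exports.
Local Open Scope classical_set_scope.
Local Open Scope ring_scope.
Set Implicit Arguments. Unset Strict Implicit. Unset Printing Implicit Defensive.
Set Warnings "-all".

Lemma dotvE (R : ringType) n (u v : 'cV[R]_n) : dotv u v = \sum_i u i 0 * v i 0.
Proof. by rewrite /dotv !mxE; apply: eq_bigr => i _; rewrite mxE. Qed.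

Lemma dotvC (R : comRingType) n (u v : 'cV[R]_n) : dotv u v = dotv v u.
Proof. by rewrite !dotvE; apply: eq_bigr => i _; rewrite mulrC. Qed.

Lemma dotvDl (R : ringType) n (u v w : 'cV[R]_n) : dotv (u + v) w = dotv u w + dotv v w.
Proof. by rewrite !dotvE -big_split; apply: eq_bigr => i _; rewrite mxE mulrDl. Qed.

Lemma dotvNl (R : ringType) n (u w : 'cV[R]_n) : dotv (- u) w = - dotv u w.
Proof. by rewrite !dotvE -sumrN; apply: eq_bigr => i _; rewrite mxE mulNr. Qed.

Lemma dotvBl (R : ringType) n (u v w : 'cV[R]_n) : dotv (u - v) w = dotv u w - dotv v w.
Proof. by rewrite dotvDl dotvNl. Qed.

Lemma dotvZl (R : comRingType) n k (u w : 'cV[R]_n) : dotv (k *: u) w = k * dotv u w.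
Proof. by rewrite !dotvE mulr_sumr; apply: eq_bigr => i _; rewrite mxE mulrA. Qed.

Lemma dotv0l (R : ringType) n (w : 'cV[R]_n) : dotv 0 w = 0.
Proof. by rewrite dotvE big1 // => i _; rewrite mxE mul0r. Qed.

Lemma dotvDr (R : comRingType) n (u v w : 'cV[R]_n) : dotv w (u + v) = dotv w u + dotv w v.
Proof. by rewrite !(dotvC w) dotvDl. Qed.
Lemma dotvNr (R : comRingType) n (u w : 'cV[R]_n) : dotv w (- u) = - dotv w u.
Proof. by rewrite !(dotvC w) dotvNl. Qed.
Lemma dotvBr (R : comRingType) n (u v w : 'cV[R]_n) : dotv w (u - v) = dotv w u - dotv w v.
Proof. by rewrite !(dotvC w) dotvBl. Qed.
Lemma dotv0r (R : comRingType) n (w : 'cV[R]_n) : dotv w 0 = 0.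
Proof. by rewrite dotvC dotv0l. Qed.
Lemma dotvZr (R : comRingType) n k (u w : 'cV[R]_n) : dotv w (k *: u) = k * dotv w u.
Proof. by rewrite !(dotvC w) dotvZl. Qed.

Lemma dotv_mul (R : comRingType) n (A : 'M[R]_n) (u v : 'cV[R]_n) :
  dotv u (A *m v) = dotv (A^T *m u) v.
Proof. by rewrite /dotv trmx_mul trmxK mulmxA. Qed.

Lemma dotv_eq0 (R : realFieldType) n (u : 'cV[R]_n) :
  (forall w, dotv u w = 0) -> u = 0.
Proof.
move=> H; have := H u; rewrite dotvE => H2.
have H3 : forall i : 'I_n, u i 0 * u i 0 = 0.
  by move=> i; apply: (psumr_eq0P _ H2) => // k _; rewrite -expr2 sqr_ge0.
apply/matrixP => i j; rewrite (ord1 j) mxE.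
by have /eqP := H3 i; rewrite mulf_eq0 orbb => /eqP.
Qed.

Lemma diffPi (R : realType) n (Q : set 'cV[R]_n) Pi q :
  projection_function Q Pi -> Q q -> differentiable Pi q.
Proof. by move=> [[U [oU QU sm]] _] Qq; exact: (sm [::] q (QU _ Qq)). Qed.

Lemma PiPi (R : realType) n (Q : set 'cV[R]_n) Pi q :
  projection_function Q Pi -> Q q -> Pi q *m Pi q = Pi q.
Proof. by move=> [_ H] Qq; case: (H q Qq). Qed.

Lemma tanP (R : realType) n (Q : set 'cV[R]_n) Pi q v :
  projection_function Q Pi -> Q q -> tangent_space Q q v <-> Pi q *m v = v.
Proof.
move=> hPi Qq; have [PP Ht] := hPi.2 q Qq; split.
  by move/Ht => [w ->]; rewrite mulmxA PP.
by move=> e; apply/Ht; exists v; rewrite e.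
Qed.

Lemma PidE (R : realType) n (Q : set 'cV[R]_n) Pi q v :
  projection_function Q Pi -> Q q -> Pid Pi q v = 'd Pi q v.
Proof. by move=> hPi Qq; rewrite /Pid deriveE //; exact: diffPi hPi Qq. Qed.

Lemma key (R : realType) n (Q : set 'cV[R]_n) Pi q a :
  projection_function Q Pi -> Q q -> tangent_space Q q a ->
  Pi q *m Pid Pi q a *m Pi q = 0.
Proof.
move=> hPi Qq [gam [g0 nQ dg Dg]].
have dPi := diffPi hPi Qq.
have dgam : differentiable gam 0 := (derivable1_diffP _ _).1 dg.
have dPi0 : differentiable Pi (gam 0) by rewrite g0.
have dPg : differentiable (Pi \o gam) 0 by apply: differentiable_comp.
have DPg : 'D_1 (Pi \o gam) 0 = Pid Pi q a.
  rewrite deriveE // (diff_comp dgam dPi0) /= -(deriveE _ dgam) Dg g0 /Pid deriveE //.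
have derP : derivable (Pi \o gam) 0 1 := diff_derivable dPg.
have derPij := (derivable_mxP _ _ _).1 derP.
have DPij : forall i j, 'D_1 (fun t => (Pi \o gam) t i j) 0 = Pid Pi q a i j.
  by move=> i j; rewrite -DPg derive_mx // mxE.
pose M := fun t => Pi (gam t) *m Pi (gam t).
have Mij : forall i j, (fun t => M t i j) = \sum_(k < n)
   ((fun t => (Pi \o gam) t i k) * (fun t => (Pi \o gam) t k j)).
  by move=> i j; rewrite fct_sumE; apply/funext => t; rewrite /M mxE.
have derM : derivable M 0 1.
  apply/derivable_mxP => i j; rewrite Mij; apply: derivable_sum => k.
  exact: derivableM.
have DM : 'D_1 M 0 = Pi q *m Pid Pi q a + Pid Pi q a *m Pi q.
  rewrite derive_mx //; apply/matrixP => i j; rewrite !mxE Mij derive_sum; last first.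
    by move=> k; exact: derivableM.
  rewrite -big_split; apply: eq_bigr => k _; rewrite deriveM // !DPij /= g0.
  by congr (_ + _); apply: mulrC.
have eqMP : \forall t \near 0, M t = (Pi \o gam) t.
  by apply: filterS nQ => t Qt; rewrite /M /= (PiPi hPi Qt).
have := @near_eq_derive _ _ _ M (Pi \o gam) 0 (1 : R) eqMP; rewrite DM DPg => E.
have PP := PiPi hPi Qq.
have : Pi q *m (Pi q *m Pid Pi q a + Pid Pi q a *m Pi q) = Pi q *m Pid Pi q a by rewrite E.
rewrite mulmxDr !mulmxA PP => /(congr1 (fun X => X - Pi q *m Pid Pi q a)).
by rewrite addrAC !subrr add0r.
Qed.

Lemma dotv_ge0 (R : realFieldType) n (u : 'cV[R]_n) : 0 <= dotv u u.
Proof. by rewrite dotvE sumr_ge0 // => i _; rewrite -expr2 sqr_ge0. Qed.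

Lemma dotv_self0 (R : realFieldType) n (u : 'cV[R]_n) : dotv u u = 0 -> u = 0.
Proof.
rewrite dotvE => H2.
have H3 : forall i : 'I_n, u i 0 * u i 0 = 0.
  by move=> i; apply: (psumr_eq0P _ H2) => // k _; rewrite -expr2 sqr_ge0.
apply/matrixP => i j; rewrite (ord1 j) mxE.
by have /eqP := H3 i; rewrite mulf_eq0 orbb => /eqP.
Qed.

Lemma unit_M (R : realFieldType) n (P : 'M[R]_n) :
  P *m P = P -> (P^T *m P + (1%:M - P)^T *m (1%:M - P)) \in unitmx.
Proof.
move=> PP; set M := _ + _.
have inj : forall y : 'cV[R]_n, M *m y = 0 -> y = 0.
  move=> y My.
  have : dotv y (M *m y) = 0 by rewrite My dotv0r.
  rewrite /M mulmxDl dotvDr -!mulmxA (dotv_mul P^T) (dotv_mul (1%:M - P)^T) !trmxK => /eqP.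
  rewrite paddr_eq0 ?dotv_ge0 // => /andP[/eqP h1 /eqP h2].
  have e1 := dotv_self0 h1; have e2 := dotv_self0 h2.
  move: e2; rewrite mulmxBl mul1mx e1 subr0 //.
have Msym : M^T = M by rewrite /M raddfD /= !trmx_mul !trmxK.
rewrite -row_free_unit -kermx_eq0; apply/eqP/row_matrixP => i.
rewrite row0.
have K0 : kermx M *m M = 0 by apply/sub_kermxP.
have : row i (kermx M) *m M = 0 by rewrite -row_mul K0 row0.
move=> /(congr1 trmx); rewrite trmx_mul Msym trmx0 => /inj /(congr1 trmx).
by rewrite trmxK trmx0.
Qed.

Lemma rep_lin (R : comRingType) n (g : 'cV[R]_n -> R) :
  (forall u v, g (u + v) = g u + g v) -> (forall k u, g (k *: u) = k * g u) ->
  forall D, g D = dotv D (\col_i g (delta_mx i 0)).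
Proof.
move=> gD gZ D.
have g0 : g 0 = 0 by rewrite -(scale0r 0) gZ mul0r.
rewrite dotvE {1}(matrix_sum_delta D) (big_morph g gD g0).
apply: eq_bigr => i _; rewrite big_ord1 gZ mxE; congr (_ * g _).
Qed.


Lemma PidD (R : realType) n (Q : set 'cV[R]_n) Pi q u v :
  projection_function Q Pi -> Q q -> Pid Pi q (u + v) = Pid Pi q u + Pid Pi q v.
Proof. by move=> h Qq; rewrite !(PidE _ h Qq) linearD. Qed.

Lemma PidZ (R : realType) n (Q : set 'cV[R]_n) Pi q k u :
  projection_function Q Pi -> Q q -> Pid Pi q (k *: u) = k *: Pid Pi q u.
Proof. by move=> h Qq; rewrite !(PidE _ h Qq) linearZ. Qed.

Lemma PidB (R : realType) n (Q : set 'cV[R]_n) Pi q u v :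
  projection_function Q Pi -> Q q -> Pid Pi q (u - v) = Pid Pi q u - Pid Pi q v.
Proof. by move=> h Qq; rewrite !(PidE _ h Qq) linearB. Qed.

Lemma Pid0 (R : realType) n (Pi : 'cV[R]_n -> 'M[R]_n) q : Pid Pi q 0 = 0.
Proof. exact: derive0. Qed.

Lemma C1 (R : realType) n (Q : set 'cV[R]_n) Pi q (p a xi : 'cV[R]_n) :
  projection_function Q Pi -> Q q -> (Pi q)^T *m p = p ->
  tangent_space Q q a -> tangent_space Q q xi ->
  dotv p (Pid Pi q a *m xi) = 0.
Proof.
move=> h Qq pf ta /(tanP _ h Qq) txi.
rewrite -txi -{1}pf -dotv_mul !mulmxA (key h Qq ta) mul0mx dotv0r //.
Qed.

Lemma C2 (R : realType) n (Q : set 'cV[R]_n) Pi q (p a : 'cV[R]_n) :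
  projection_function Q Pi -> Q q -> (Pi q)^T *m p = p ->
  tangent_space Q q a -> (Pi q)^T *m ((Pid Pi q a)^T *m p) = 0.
Proof.
move=> h Qq pf ta; apply: dotv_eq0 => w.
rewrite dotvC dotv_mul trmxK dotv_mul trmxK dotvC.
rewrite (C1 h Qq pf ta) //; apply/(tanP _ h Qq).
by rewrite mulmxA (PiPi h Qq).
Qed.

Lemma raise_spec (R : realType) n (Q : set 'cV[R]_n) Pi q p hh :
  projection_function Q Pi -> Q q ->
  let Phi := raise Q Pi q p hh in
  tangent_space Q q Phi /\ forall D, tangent_space Q q D ->
             dotv D Phi = dotv hh ((Pid Pi q D)^T *m p).
Proof.
move=> h Qq /=; rewrite /raise; set S := (X in xget 0 X).
suff [x Sx] : exists x, S x by exact: (xgetPex 0 (ex_intro _ x Sx)).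
pose g := fun D => dotv hh ((Pid Pi q D)^T *m p).
have gD : forall u v, g (u + v) = g u + g v.
  by move=> u v; rewrite /g (PidD u v h Qq) raddfD /= mulmxDl dotvDr.
have gZ : forall k u, g (k *: u) = k * g u.
  by move=> k u; rewrite /g (PidZ k u h Qq) linearZ /= -scalemxAl dotvZr.
pose c := \col_i g (delta_mx i 0).
have Hc := rep_lin gD gZ.
set P := Pi q.
have PP : P *m P = P := PiPi h Qq.
pose M := P^T *m P + (1%:M - P)^T *m (1%:M - P).
have uM : M \in unitmx := unit_M PP.
pose w := invmx M *m (P^T *m c).
have Mw : M *m w = P^T *m c by rewrite /w mulKVmx.
have PM : P^T *m M = P^T *m P.
  rewrite /M mulmxDr !mulmxA -!trmx_mul PP mulmxBl mul1mx PP subrr trmx0 mul0mx.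
  by rewrite addr0.
have Pw : P^T *m (P *m w) = P^T *m c.
  by rewrite mulmxA -PM -mulmxA Mw mulmxA -trmx_mul PP.
exists (P *m w); rewrite /S /=; split.
  by apply/(tanP _ h Qq); rewrite mulmxA PP.
move=> D /(tanP _ h Qq) tD.
rewrite -/(g D) Hc -/c -tD -/P [LHS]dotvC dotv_mul Pw -dotv_mul; exact: dotvC.
Qed.

Lemma raise_perp (R : realType) n (Q : set 'cV[R]_n) Pi q (p hh : 'cV[R]_n) :
  projection_function Q Pi -> Q q -> (Pi q)^T *m p = p ->
  tangent_space Q q hh -> (Pi q)^T *m raise Q Pi q p hh = 0.
Proof.
move=> h Qq pf th; have [_ sp] := raise_spec p hh h Qq.
apply: dotv_eq0 => w; rewrite dotvC dotv_mul trmxK sp; last first.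
  by apply/(tanP _ h Qq); rewrite mulmxA (PiPi h Qq).
rewrite dotv_mul trmxK dotvC; apply: (C1 h Qq pf _ th).
by apply/(tanP _ h Qq); rewrite mulmxA (PiPi h Qq).
Qed.

Lemma dotv_trl (R : comRingType) n (A : 'M[R]_n) (u v : 'cV[R]_n) :
  dotv (A^T *m u) v = dotv u (A *m v).
Proof. by rewrite dotv_mul. Qed.

Lemma dotv_ml (R : comRingType) n (A : 'M[R]_n) (u v : 'cV[R]_n) :
  dotv (A *m u) v = dotv u (A^T *m v).
Proof. by rewrite -[in LHS](trmxK A) dotv_trl. Qed.

Lemma PTPT (R : realType) n (Q : set 'cV[R]_n) Pi q (w : 'cV[R]_n) :
  projection_function Q Pi -> Q q -> (Pi q)^T *m ((Pi q)^T *m w) = (Pi q)^T *m w.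
Proof. by move=> h Qq; rewrite mulmxA -trmx_mul (PiPi h Qq). Qed.

Lemma ham_tan (R : realType) n (Q : set 'cV[R]_n) Pi (q p hq hp : 'cV[R]_n) :
  projection_function Q Pi -> Q q -> (Pi q)^T *m p = p ->
  TTstar Q Pi q p (ham_e Q Pi q p hq hp).1 (ham_e Q Pi q p hq hp).2.
Proof.
move=> h Qq pf; rewrite /ham_e /=; split.
  by apply/(tanP _ h Qq); rewrite mulmxA (PiPi h Qq).
rewrite mulmxBr (C2 h Qq pf) ?sub0r ?(PTPT _ h Qq) 1?addrC //.
by apply/(tanP _ h Qq); rewrite mulmxA (PiPi h Qq).
Qed.

Lemma ham_id (R : realType) n (Q : set 'cV[R]_n) Pi (q p hq hp xq xp : 'cV[R]_n) :
  projection_function Q Pi -> Q q -> (Pi q)^T *m p = p ->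
  TTstar Q Pi q p xq xp ->
  dotv hq xq + dotv hp xp =
  dotv (ham_e Q Pi q p hq hp).1 xp - dotv (ham_e Q Pi q p hq hp).2 xq.
Proof.
move=> h Qq pf [txq exp]; rewrite /ham_e /=.
have txq' := txq; move/(tanP _ h Qq): txq' => Pxq.
have [_ sp] := raise_spec p hp h Qq.
have teq : tangent_space Q q (Pi q *m hp).
  by apply/(tanP _ h Qq); rewrite mulmxA (PiPi h Qq).
have E1 : dotv (Pi q *m hp) xp = dotv hp xp - dotv hp ((Pid Pi q xq)^T *m p).
  rewrite dotv_ml.
  have -> : (Pi q)^T *m xp = xp - (Pid Pi q xq)^T *m p by rewrite {2}exp addrK.
  by rewrite dotvBr.
have E2 : dotv ((Pid Pi q (Pi q *m hp))^T *m p - (Pi q)^T *m (hq + raise Q Pi q p hp)) xq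
   = - (dotv hq xq + dotv hp ((Pid Pi q xq)^T *m p)).
  rewrite dotvBl dotv_trl (C1 h Qq pf teq txq) sub0r dotv_trl Pxq dotvDl.
  by rewrite (dotvC (raise _ _ _ _ _) xq) (sp _ txq).
rewrite E1 E2; ring.
Qed.



Lemma TT0 (R : realType) n (Q : set 'cV[R]_n) Pi (q p : 'cV[R]_n) :
  projection_function Q Pi -> Q q -> TTstar Q Pi q p 0 0.
Proof.
move=> h Qq; split; first by apply/(tanP _ h Qq); rewrite mulmx0.
by rewrite Pid0 trmx0 !mul0mx mulmx0 addr0.
Qed.

Lemma TTsub (R : realType) n (Q : set 'cV[R]_n) Pi (q p a1 a2 b1 b2 : 'cV[R]_n) :
  projection_function Q Pi -> Q q -> TTstar Q Pi q p a1 a2 -> TTstar Q Pi q p b1 b2 ->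
  TTstar Q Pi q p (a1 - b1) (a2 - b2).
Proof.
move=> h Qq [/(tanP _ h Qq) ta ea] [/(tanP _ h Qq) tb eb]; split.
  by apply/(tanP _ h Qq); rewrite mulmxBr ta tb.
rewrite (PidB _ _ h Qq) mulmxBr.
have -> : (Pid Pi q a1 - Pid Pi q b1)^T = (Pid Pi q a1)^T - (Pid Pi q b1)^T.
  by rewrite linearB.
by rewrite mulmxBl {1}ea {1}eb opprD addrACA.
Qed.

Lemma nondeg (R : realType) n (Q : set 'cV[R]_n) Pi (q p e1 e2 : 'cV[R]_n) :
  projection_function Q Pi -> Q q -> (Pi q)^T *m p = p ->
  TTstar Q Pi q p e1 e2 ->
  (forall xq xp, TTstar Q Pi q p xq xp -> Omega (e1, e2) (xq, xp) = 0) ->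
  e1 = 0 /\ e2 = 0.
Proof.
move=> h Qq pf [/(tanP _ h Qq) te1 ee2] H0.
have e10 : e1 = 0.
  apply: dotv_eq0 => w.
  have TT : TTstar Q Pi q p 0 ((Pi q)^T *m w).
    split; first by apply/(tanP _ h Qq); rewrite mulmx0.
    by rewrite Pid0 trmx0 mul0mx addr0 (PTPT _ h Qq).
  by have := H0 _ _ TT; rewrite /Omega /= dotv0r subr0 -(dotv_ml (Pi q)) te1.
have PTe2 : (Pi q)^T *m e2 = 0.
  apply: dotv_eq0 => w.
  have tw : tangent_space Q q (Pi q *m w).
    by apply/(tanP _ h Qq); rewrite mulmxA (PiPi h Qq).
  have TT : TTstar Q Pi q p (Pi q *m w) ((Pid Pi q (Pi q *m w))^T *m p).
    split; first exact: tw.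
    by rewrite (C2 h Qq pf tw) add0r.
  have := H0 _ _ TT; rewrite /Omega /= e10 dotv0l sub0r => /eqP.
  by rewrite oppr_eq0 dotv_trl => /eqP.
split => //; rewrite ee2 PTe2 e10 Pid0 trmx0 mul0mx addr0 //.
Qed.

Lemma uniq_e (R : realType) n (Q : set 'cV[R]_n) Pi (q p hq hp e1 e2 : 'cV[R]_n) :
  projection_function Q Pi -> Q q -> (Pi q)^T *m p = p ->
  TTstar Q Pi q p e1 e2 ->
  (forall xq xp, TTstar Q Pi q p xq xp ->
     dotv hq xq + dotv hp xp = Omega (e1, e2) (xq, xp)) ->
  (e1, e2) = ham_e Q Pi q p hq hp.
Proof.
move=> h Qq pf te He.
have tf := ham_tan hq hp h Qq pf.
have Hf := fun xq xp (t : TTstar Q Pi q p xq xp) => ham_id hq hp h Qq pf t.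
move: tf Hf; case: (ham_e Q Pi q p hq hp) => f1 f2 /= tf Hf.
have := nondeg h Qq pf (TTsub h Qq te tf).
case=> [xq xp tx|/eqP d1 /eqP d2].
  have E := He _ _ tx; have F := Hf _ _ tx; rewrite /Omega /= in E.
  rewrite /Omega /= !dotvBl.
  transitivity ((dotv e1 xp - dotv e2 xq) - (dotv f1 xp - dotv f2 xq)); first ring.
  by rewrite -E -F subrr.
by move: d1 d2; rewrite !subr_eq0 => /eqP -> /eqP ->.
Qed.



Lemma grad_lem (R : realType) n (H : 'cV[R]_n * 'cV[R]_n -> R) z :
  differentiable H z -> forall v, 'D_v H z = dotv (gradq H z) v.1 + dotv (gradp H z) v.2.
Proof.
move=> dH v; rewrite deriveE //.
set f := 'd H z.
have E : v = (v.1, 0) + (0, v.2).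
  by case: v => a b; apply/pair_equal_spec; split => /=; [rewrite addr0|rewrite add0r].
rewrite {1}E linearD.
pose g1 := fun u : 'cV[R]_n => f (u, 0).
pose g2 := fun u : 'cV[R]_n => f (0, u).
have g1D : forall u w, g1 (u + w) = g1 u + g1 w.
  move=> u w; rewrite /g1 -linearD; congr (f _).
  by apply/pair_equal_spec; split => /=; rewrite ?addr0.
have g2D : forall u w, g2 (u + w) = g2 u + g2 w.
  move=> u w; rewrite /g2 -linearD; congr (f _).
  by apply/pair_equal_spec; split => /=; rewrite ?addr0.
have g1Z : forall k u, g1 (k *: u) = k * g1 u.
  move=> k u; rewrite /g1 (_ : (k *: u, 0) = k *: ((u, 0) : 'cV[R]_n * 'cV[R]_n)).
    exact: linearZ.
  by apply/pair_equal_spec; split => /=; rewrite ?scaler0.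
have g2Z : forall k u, g2 (k *: u) = k * g2 u.
  move=> k u; rewrite /g2 (_ : (0, k *: u) = k *: ((0, u) : 'cV[R]_n * 'cV[R]_n)).
    exact: linearZ.
  by apply/pair_equal_spec; split => /=; rewrite ?scaler0.
rewrite -/(g1 v.1) -/(g2 v.2) (rep_lin g1D g1Z) (rep_lin g2D g2Z).
rewrite (dotvC (gradq H z)) (dotvC (gradp H z)).
congr (_ + _); congr (dotv _ _); apply/matrixP => i j; rewrite /gradq /gradp !mxE deriveE //.
Qed.

Unset Implicit Arguments.

Theorem mainTheorem6 (R : realType) (n : nat) (Q : set 'cV[R]_n)
    (Pi : 'cV[R]_n -> 'M[R]_n) :
  embedded_submanifold Q -> projection_function Q Pi ->
  (forall q p : 'cV[R]_n, Tstar Q Pi (q, p) ->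
     (forall hq hp : 'cV[R]_n,
        let e := ham_e Q Pi q p hq hp in
        TTstar Q Pi q p e.1 e.2 /\
        (forall xq xp, TTstar Q Pi q p xq xp ->
           dotv hq xq + dotv hp xp = dotv e.1 xp - dotv e.2 xq /\
           dotv e.1 xp - dotv e.2 xq = Omega e (xq, xp))) /\
     (forall s, cotS Pi q s ->
        let e := ham_e Q Pi q p s.1 s.2 in
        TTstar Q Pi q p e.1 e.2 /\ (- ((Pi q)^T *m e.2), e.1) = s) /\
     (forall e : 'cV[R]_n * 'cV[R]_n, TTstar Q Pi q p e.1 e.2 ->
        cotS Pi q (- ((Pi q)^T *m e.2), e.1) /\
        ham_e Q Pi q p (- ((Pi q)^T *m e.2)) e.1 = e) /\
     (forall e : 'cV[R]_n * 'cV[R]_n, TTstar Q Pi q p e.1 e.2 ->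
        (forall xq xp, TTstar Q Pi q p xq xp -> Omega e (xq, xp) = 0) ->
        e = (0, 0)) /\
     (forall (hq hp : 'cV[R]_n) (e' : 'cV[R]_n * 'cV[R]_n),
        TTstar Q Pi q p e'.1 e'.2 ->
        (forall xq xp, TTstar Q Pi q p xq xp ->
           dotv hq xq + dotv hp xp = Omega e' (xq, xp)) ->
        e' = ham_e Q Pi q p hq hp)) /\
  (forall (H : 'cV[R]_n * 'cV[R]_n -> R) (W : set ('cV[R]_n * 'cV[R]_n)),
     open W -> Tstar Q Pi `<=` W -> smooth_on W H ->
     let XH := fun z : 'cV[R]_n * 'cV[R]_n =>
       (Pi z.1 *m gradp H z,
        (Pid Pi z.1 (Pi z.1 *m gradp H z))^T *m z.2
        - (Pi z.1)^T *m (gradq H z + raise Q Pi z.1 z.2 (gradp H z))) in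
     vector_field Q Pi XH /\
     (forall Y, vector_field Q Pi Y ->
        forall z, Tstar Q Pi z -> Omega (XH z) (Y z) = 'D_(Y z) H z) /\
     (forall X, vector_field Q Pi X ->
        (forall Y, vector_field Q Pi Y ->
           forall z, Tstar Q Pi z -> Omega (X z) (Y z) = 'D_(Y z) H z) ->
        forall z, Tstar Q Pi z -> X z = XH z)).
Proof.
move=> _ h; split.
  move=> q p [Qq pf]; rewrite /= in Qq pf.
  split.
    move=> hq hp; split; first exact: ham_tan.
    by move=> xq xp tx; split; [exact: (ham_id _ _ h Qq pf tx)|].
  split.
    move=> [s1 s2] [s1f s2f]; rewrite /= in s1f s2f; split; first exact: ham_tan.
    have ts2 : tangent_space Q q s2 by apply/(tanP _ h Qq).
    have tPs2 : tangent_space Q q (Pi q *m s2).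
      by apply/(tanP _ h Qq); rewrite mulmxA (PiPi h Qq).
    rewrite /ham_e /=; apply/pair_equal_spec; split; last exact: s2f.
    rewrite mulmxBr (C2 h Qq pf tPs2) sub0r opprK (PTPT _ h Qq) mulmxDr.
    by rewrite (raise_perp h Qq pf ts2) addr0 s1f.
  split.
    move=> [e1 e2] [te1 ee2]; rewrite /= in te1 ee2.
    have Pe1 := (tanP _ h Qq).1 te1; split.
      split; last exact: Pe1.
      by rewrite /= mulmxN (PTPT _ h Qq).
    rewrite /ham_e /= Pe1; apply/pair_equal_spec; split; first by [].
    rewrite mulmxDr (raise_perp h Qq pf te1) addr0 mulmxN opprK (PTPT _ h Qq) addrC.
    exact/esym.
  split.
    move=> [e1 e2] te H0; rewrite /= in te.
    by have [-> ->] := nondeg h Qq pf te H0.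
  move=> hq hp [e1 e2] te He.
  exact: (uniq_e h Qq pf te He).
move=> H W oW TW sH XH.
have dH : forall z, Tstar Q Pi z -> differentiable H z.
  by move=> z Tz; exact: (sH [::] z (TW _ Tz)).
have XHE : forall z, XH z = ham_e Q Pi z.1 z.2 (gradq H z) (gradp H z) by [].
split.
  move=> [q p] [Qq pf]; rewrite XHE; exact: ham_tan.
split.
  move=> Y vY [q p] Tz; have [Qq pf] := Tz; rewrite /= in Qq pf.
  rewrite XHE (grad_lem (dH _ Tz)); have := vY _ Tz.
  case: (Y (q, p)) => yq yp TY.
  rewrite /Omega; symmetry; exact: (ham_id _ _ h Qq pf TY).
move=> X vX HX [q p] Tz; have [Qq pf] := Tz; rewrite /= in Qq pf.
rewrite XHE.
case E : (X (q, p)) => [x1 x2].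
have TX : TTstar Q Pi q p x1 x2 by have := vX _ Tz; rewrite E.
apply: (uniq_e h Qq pf TX) => xq xp tx.
pose Y := fun w : 'cV[R]_n * 'cV[R]_n => if w == (q, p) then (xq, xp) else 0.
have vY : vector_field Q Pi Y.
  move=> w Tw; rewrite /Y; case: eqP => [->|_]; first exact: tx.
  have [Qw _] := Tw; exact (@TT0 _ _ Q Pi w.1 w.2 h Qw).
have := HX Y vY (q, p) Tz; rewrite /Y eqxx E => ->.
by rewrite (grad_lem (dH _ Tz)).
Qed.
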